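(* Let $p\equiv 1\pmod 4$ be a prime with $p\ge 13$, let $\pi\in\mathbb{Z}[i]$ with $\pi\pi^*=p$, and let $C$ be an $(n,k)$ linear code over $G_\pi$. If $C$ corrects all errors of Mannheim weight $2$ or less, then $p^{n-k}\ge 8n^2+1$.
   Context: $G=\mathbb{Z}[i]$ is the ring of Gaussian integers, $\pi^*$ is the complex conjugate of $\pi$, and $G_\pi=G/\pi G$ (a field with $p$ elements). The Mannheim weight of $\beta\in G_\pi$ is $\min\{|a|+|b| : a+bi\equiv\beta \pmod \pi\}$; the Mannheim weight of a vector in $G_\pi^n$ is the sum of the Mannheim weights of its components. An $(n,k)$ linear code over $G_\pi$ is a $k$-dimensional subspace $C\subseteq G_\pi^n$ (so there are $p^{n-k}$ cosets). $C$ corrects all errors of weight $2$ or less if all vectors of $G_\pi^n$ of Mannheim weight at most $2$ lie in pairwise distinct cosets of $C$. *)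

(* Defs.v *)
From HB Require Import structures.
From mathcomp Require Import all_boot all_order all_algebra.
From Stdlib Require Import ClassicalEpsilon.
Set Implicit Arguments. Unset Strict Implicit. Unset Printing Implicit Defensive.
Import Order.TTheory GRing.Theory Num.Theory.
Local Open Scope ring_scope.

(* Gaussian integers Z[i]: the pair (a, b) stands for a + b i. *)
Definition gint := (int * int)%type.
Definition gsub (x y : gint) : gint := (x.1 - y.1, x.2 - y.2).
Definition gmul (x y : gint) : gint :=
  (x.1 * y.1 - x.2 * y.2, x.1 * y.2 + x.2 * y.1).
Definition gconj (x : gint) : gint := (x.1, - x.2).

Definition gdvd (d z : gint) : Prop := exists q : gint, z = gmul d q.
Definition gcong (pi z w : gint) : Prop := gdvd pi (gsub z w).

(* G_pi = Z[i]/pi Z[i] is identified with 'F_p through the canonical ring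
   isomorphism Z/pZ -> Z[i]/pi Z[i] induced by the inclusion Z -> Z[i]:
   the element b of 'F_p corresponds to the class of the rational integer b. *)
Definition glift (p : nat) (b : 'F_p) : gint := ((nat_of_ord b)%:Z, 0).

Definition mw_attained (p : nat) (pi : gint) (beta : 'F_p) (n : nat) : Prop :=
  exists a b : int, gcong pi (a, b) (glift beta) /\ (absz a + absz b)%N = n.

Lemma mw_attained_ex (p : nat) (pi : gint) (beta : 'F_p) :
  exists n, (fun m => if excluded_middle_informative (mw_attained pi beta m)
                      then true else false) n.
Proof.
exists (nat_of_ord beta).
case: excluded_middle_informative => // H; exfalso; apply: H.
exists (nat_of_ord beta)%:Z, 0; split; last by rewrite addn0.
exists (0, 0); rewrite /gsub /gmul /=.
by rewrite !mulr0 !subrr.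
Qed.

Definition mweight (p : nat) (pi : gint) (beta : 'F_p) : nat :=
  ex_minn (mw_attained_ex pi beta).

Definition mweight_vec (p : nat) (pi : gint) (n : nat) (x : 'rV['F_p]_n) : nat :=
  (\sum_(j < n) mweight pi (x ord0 j))%N.

Definition corrects2 (p : nat) (pi : gint) (n : nat)
  (C : {vspace 'rV['F_p]_n}) : Prop :=
  forall x y : 'rV['F_p]_n,
    (mweight_vec pi x <= 2)%N -> (mweight_vec pi y <= 2)%N ->
    x != y -> (x - y) \notin C.

(* Main.v *)
Require Import Defs.
From Stdlib Require Import ClassicalEpsilon.
From HB Require Import structures.
From mathcomp Require Import all_boot all_order all_algebra all_field.
From mathcomp Require Import zify ring lra.
Import GRing.Theory.
Local Open Scope ring_scope.
Lemma Fp_nat_dvd (p : nat) (m : nat) : prime p -> (m%:R : 'F_p) = 0 -> (p %| m)%N.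
Proof. by move=> pp /(congr1 val); rewrite /= val_Fp_nat // => /eqP; rewrite -/(dvdn p m). Qed.
Lemma Fp_int_dvd (p : nat) (z : int) : prime p -> (z%:~R : 'F_p) = 0 -> (p%:Z %| z)%Z.
Proof.
move=> pp; case: z => m.
  by rewrite -pmulrn => /(@Fp_nat_dvd p _ pp); rewrite dvdzE.
rewrite NegzE mulrNz -pmulrn => /eqP; rewrite oppr_eq0 => /eqP /(@Fp_nat_dvd p _ pp).
by rewrite dvdzE.
Qed.
Lemma val_natr (p : nat) (x : 'F_p) : prime p -> ((nat_of_ord x)%:R : 'F_p) = x.
Proof. by move=> pp; apply: val_inj; rewrite /= val_Fp_nat // modn_small //; by case: x => x; rewrite /= Fp_cast. Qed.

Lemma repr_gcong (p : nat) (a b : int) (U beta : 'F_p) (x y : int) :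
 prime p -> a*a + b*b = p%:Z ->
 a%:~R + U * b%:~R = 0 -> b%:~R - U * a%:~R = 0 ->
 beta = x%:~R + y%:~R * U -> gcong (a,b) (x,y) (glift beta).
Proof.
move=> pp pab h1 h2 hb.
set u0 : int := (nat_of_ord U)%:Z.
set t : int := (nat_of_ord beta)%:Z.
have hu : (u0%:~R : 'F_p) = U by rewrite /u0 -pmulrn val_natr.
have ht : (t%:~R : 'F_p) = beta by rewrite /t -pmulrn val_natr.
have /(@Fp_int_dvd p _ pp)/dvdzP[w2 e2] : ((a + u0 * b)%:~R : 'F_p) = 0.
  by rewrite intrD intrM hu.
have /(@Fp_int_dvd p _ pp)/dvdzP[w1 e1] : ((b - u0 * a)%:~R : 'F_p) = 0.
  by rewrite intrB intrM hu.
have /(@Fp_int_dvd p _ pp)/dvdzP[m em] : ((x - t + y * u0)%:~R : 'F_p) = 0.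
  by rewrite intrD intrB intrM hu ht hb; ring.
have p0 : p%:Z != 0 by rewrite eqz_nat -lt0n prime_gt0.
have f1 : a * w1 - b * w2 = - u0.
  apply: (mulfI p0).
  have -> : p%:Z * (a * w1 - b * w2) = a * (w1 * p) - b * (w2 * p) by ring.
  rewrite -e1 -e2 -pab; ring.
have f2 : a * w2 + b * w1 = 1.
  apply: (mulfI p0).
  have -> : p%:Z * (a * w2 + b * w1) = a * (w2 * p) + b * (w1 * p) by ring.
  rewrite -e1 -e2 -pab; ring.
exists (a * m + y * w1, - b * m + y * w2); rewrite /gsub /gmul /=.
congr pair.
  have -> : a * (a * m + y * w1) - b * (- b * m + y * w2) = m * (a*a+b*b) + y * (a * w1 - b * w2) by ring.
  rewrite f1 pab -em; ring.
have -> : a * (- b * m + y * w2) + b * (a * m + y * w1) = y * (a * w2 + b * w1) by ring.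
by rewrite f2 mulr1 subr0.
Qed.

Lemma mweight_le (p : nat) (pi : gint) (beta : 'F_p) w :
  mw_attained pi beta w -> (mweight pi beta <= w)%N.
Proof.
move=> h; rewrite /mweight; case: ex_minnP => m _; apply.
by case: excluded_middle_informative.
Qed.

Lemma mweight_vv (p : nat) (a b : int) (U : 'F_p) (e m : nat) :
 prime p -> a*a + b*b = p%:Z ->
 a%:~R + U * b%:~R = 0 -> b%:~R - U * a%:~R = 0 -> U ^+ 2 = -1 ->
 (e < 4)%N -> (mweight (a, b) (U ^+ e * m%:R)%R <= m)%N.
Proof.
move=> pp pab h1 h2 hU he; apply: mweight_le.
have H : forall x y : int, (absz x + absz y)%N = m ->
   U ^+ e * m%:R = x%:~R + y%:~R * U -> mw_attained (a, b) (U ^+ e * m%:R) m.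
  by move=> x y hxy hb; exists x, y; split=> //; apply: repr_gcong hb.
move: H; case: e he => [|[|[|[|e]]]] // _ H.
- by apply: (H m%:Z 0); rewrite ?addn0 // expr0 mul1r -pmulrn mul0r addr0.
- by apply: (H 0 m%:Z); rewrite ?add0n // expr1 -pmulrn add0r mulrC.
- by apply: (H (- m%:Z) 0); rewrite ?addn0 ?abszN // hU mulN1r mulrNz -pmulrn mul0r addr0.
- apply: (H 0 (- m%:Z)); rewrite ?add0n ?abszN // exprS hU. rewrite mulrNz -pmulrn. ring.
Qed.

Lemma mweight0 (p : nat) (a b : int) (U : 'F_p) :
 prime p -> a*a + b*b = p%:Z ->
 a%:~R + U * b%:~R = 0 -> b%:~R - U * a%:~R = 0 -> U ^+ 2 = -1 ->
 mweight (a, b) (0 : 'F_p) = 0%N.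
Proof.
move=> pp pab h1 h2 hU; apply/eqP; rewrite -leqn0.
by have := @mweight_vv p a b U 0 0 pp pab h1 h2 hU isT; rewrite mulr0.
Qed.
Lemma natFp_neq0 (p n : nat) : prime p -> (0 < n < p)%N -> (n%:R : 'F_p) != 0.
Proof.
move=> pp /andP[n0 np]; apply/eqP => /(congr1 val); rewrite /= val_Fp_nat // modn_small //.
by move=> h; rewrite h in n0.
Qed.

Lemma two_neq (p : nat) : prime p -> (3 <= p)%N -> (1 : 'F_p) != -1.
Proof.
move=> pp p3; apply/eqP => h.
have : (2%:R : 'F_p) = 0 by rewrite -[2%N]/(1 + 1)%N natrD {1}h addNr.
by apply/eqP; apply: natFp_neq0.
Qed.

Lemma U_pow_inj (p : nat) (U : 'F_p) (e e' : nat) : prime p -> (3 <= p)%N ->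
  U ^+ 2 = -1 -> (e < 4)%N -> (e' < 4)%N -> U ^+ e = U ^+ e' -> e = e'.
Proof.
move=> pp p3 hU.
have U0 : U != 0.
  apply/eqP=> U0; move: hU; rewrite U0 expr0n /= => /eqP; rewrite eq_sym oppr_eq0 oner_eq0 //.
wlog le : e e' / (e <= e')%N.
  move=> W he he' h; case: (leqP e e') => [l|l]; first exact: W.
  by apply/esym/W => //; apply: ltnW.
move=> he he'.
rewrite -(subnKC le) exprD -{1}(mulr1 (U ^+ e)) => /(mulfI (expf_neq0 _ U0)) h.
suff : (e' - e = 0)%N by lia.
have : (e' - e < 4)%N by lia.
move: h; case: (e' - e)%N => [|[|[|[|k]]]] //.
- rewrite expr1 => h1 _; move: hU; rewrite -h1 expr1n => /eqP; by rewrite (negbTE (@two_neq p pp p3)).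
- rewrite hU => h1; move: (@two_neq p pp p3); by rewrite -h1 eqxx.
- rewrite exprS hU mulrN1 => h1 _; have h2 : U = -1 by rewrite -[U]opprK -h1.
  move: hU; rewrite h2 sqrrN expr1n => h3; move: (@two_neq p pp p3); by rewrite -h3 eqxx.
Qed.

Lemma aux (p : nat) : prime p -> (12 < p)%N -> (16 %% p = 1)%N -> False.
Proof.
move=> pp p13 h.
have : (16 == 1 %[mod p])%N by rewrite h modn_small // (leq_trans _ p13).
rewrite eqn_mod_dvd // => hd.
have : (p %| 3 * 5)%N by [].
rewrite Euclid_dvdM //.
case/orP => /dvdn_leq => /(_ isT); lia.
Qed.

Lemma vv_inj (p : nat) (U : 'F_p) e e' m m' : prime p -> (13 <= p)%N -> U ^+ 2 = -1 ->
  (e < 4)%N -> (e' < 4)%N -> (0 < m <= 2)%N -> (0 < m' <= 2)%N ->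
  U ^+ e * m%:R = U ^+ e' * m'%:R -> e = e' /\ m = m'.
Proof.
move=> pp p13 hU he he' hm hm' h.
have U4 : U ^+ 4 = 1 by rewrite -[4%N]/(2 + 2)%N exprD hU mulrNN mulr1.
have e4 : forall f : nat, (U ^+ f) ^+ 4 = 1 by move=> f; rewrite -exprM mulnC exprM U4 expr1n.
have mm : m = m'.
  have := congr1 (fun x => x ^+ 4) h; rewrite /= !exprMn !e4 !mul1r -!natrX.
  move=> /(congr1 val); rewrite /= !val_Fp_nat //.
  clear h; move: hm hm'; case: m => [|[|[|m]]] //; case: m' => [|[|[|m']]] //= _ _.
  - rewrite -[(2^4)%N]/16%N (modn_small (_ : 1 < p)%N); last lia.
    by move=> h; case: (@aux p pp p13); rewrite -h.
  - rewrite -[(2^4)%N]/16%N (modn_small (_ : 1 < p)%N); last lia.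
    by move=> h; case: (@aux p pp p13).
split=> //; subst m'.
have m0 : (m%:R : 'F_p) != 0 by apply: (@natFp_neq0 p m pp); lia.
apply: (@U_pow_inj p U _ _ pp _ hU) => //; first lia.
exact: (mulIf m0).
Qed.

Definition vv (p : nat) (U : 'F_p) (e m : nat) : 'F_p := U ^+ e * m%:R.

Arguments vv {p}.

Definition pA (p : nat) (U : 'F_p) (n : nat) (i j : 'I_n) (c : 'I_4) (d : 'I_2) : 'F_p :=
  if i == j then vv U c d.+1 else if (i < j)%N then vv U c 1 else vv U (2 * d).+1 1.
Definition pB (p : nat) (U : 'F_p) (n : nat) (i j : 'I_n) (c : 'I_4) (d : 'I_2) : 'F_p :=
  if i == j then 0 else if (i < j)%N then vv U (2 * d) 1 else vv U c 1.

Arguments pA {p} U {n}.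
Arguments pB {p} U {n}.

Definition fv (p : nat) (U : 'F_p) (n : nat) (z : option ('I_n * 'I_n * 'I_4 * 'I_2)) :
  'rV['F_p]_n :=
  match z with
  | None => 0
  | Some (i, j, c, d) =>
      \row_k (if k == i then pA U i j c d else if k == j then pB U i j c d else 0)
  end.

Lemma vv_neq0 (p : nat) (U : 'F_p) e m : prime p -> (13 <= p)%N -> U ^+ 2 = -1 ->
  (0 < m <= 2)%N -> vv U e m != 0.
Proof.
move=> pp p13 hU hm; rewrite /vv mulf_neq0 //.
  apply: expf_neq0; apply/eqP=> U0; move: hU; rewrite U0 expr0n /= => /eqP.
  by rewrite eq_sym oppr_eq0 oner_eq0.
by apply: (@natFp_neq0 p m pp); lia.
Qed.

Lemma vv_inj1 (p : nat) (U : 'F_p) e e' : prime p -> (13 <= p)%N -> U ^+ 2 = -1 ->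
  (e < 4)%N -> (e' < 4)%N -> vv U e 1 = vv U e' 1 -> e = e'.
Proof. by move=> pp p13 hU he he' /(@vv_inj p U e e' 1 1 pp p13 hU he he' isT isT) []. Qed.

Lemma fv_inj (p : nat) (U : 'F_p) (n : nat) : prime p -> (13 <= p)%N -> U ^+ 2 = -1 ->
  injective (@fv p U n).
Proof.
move=> pp p13 hU.
have A0 : forall (i j : 'I_n) c d, pA U i j c d != 0.
  move=> i j c d; rewrite /pA; case: ifP => _; first by apply: vv_neq0 => //; have := ltn_ord d; lia.
  by case: ifP => _; apply: vv_neq0.
have B0 : forall (i j : 'I_n) c d, i != j -> pB U i j c d != 0.
  move=> i j c d /negbTE hij; rewrite /pB hij.
  by case: ifP => _; apply: vv_neq0.
have supp : forall (k i j : 'I_n) (A B : 'F_p),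
    (if k == i then A else if k == j then B else 0) != 0 -> (k == i) || (k == j).
  by move=> k i j A B; case: (k == i) => //; case: (k == j) => //; rewrite eqxx.
have inj1 : forall e e', (e < 4)%N -> (e' < 4)%N -> vv U e 1 = vv U e' 1 -> e = e'.
  by move=> e e'; apply: vv_inj1.
move=> [[[[i j] c] d]|] [[[[i' j'] c'] d']|] //= h.
- have H : forall k, (if k == i then pA U i j c d else if k == j then pB U i j c d else 0)
                   = (if k == i' then pA U i' j' c' d' else if k == j' then pB U i' j' c' d' else 0).
    by move=> k; move/rowP: h => /(_ k); rewrite !mxE.
  have Hne : forall k, (if k == i' then pA U i' j' c' d' else if k == j' then pB U i' j' c' d' else 0) != 0 -> (k == i) || (k == j).
    by move=> k; rewrite -H; apply: supp.
  have Hne' : forall k, (if k == i then pA U i j c d else if k == j then pB U i j c d else 0) != 0 -> (k == i') || (k == j').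
    by move=> k; rewrite H; apply: supp.
  have S1 : (i' == i) || (i' == j) by apply: Hne; rewrite eqxx.
  have S2 : i' != j' -> (j' == i) || (j' == j).
    by move=> hij'; apply: Hne; rewrite [j' == i']eq_sym (negbTE hij') eqxx; apply: B0.
  have S3 : (i == i') || (i == j') by apply: Hne'; rewrite eqxx.
  have S4 : i != j -> (j == i') || (j == j').
    by move=> hij; apply: Hne'; rewrite [j == i]eq_sym (negbTE hij) eqxx; apply: B0.
  have bc := ltn_ord c; have bc' := ltn_ord c'; have bd := ltn_ord d; have bd' := ltn_ord d'.
  have fin : forall (i j : 'I_n), (c : nat) = c' -> (d : nat) = d' -> Some (i, j, c, d) = Some (i, j, c', d').
    by move=> ? ? /val_inj -> /val_inj ->.
  case: (eqVneq i j) => [eij|hij].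
    subst j; case: (eqVneq i' j') => [eij'|hij'].
      subst j'; move: S1; rewrite orbb => /eqP ei; subst i'.
      have := H i; rewrite eqxx /pA eqxx /vv => /(@vv_inj p U _ _ _ _ pp p13 hU bc bc') [].
      - by have := ltn_ord d; lia.
      - by have := ltn_ord d'; lia.
      by move=> hc [hd]; apply: fin.
    move: S1 (S2 hij'); rewrite !orbb => /eqP e1 /eqP e2.
    by move: hij'; rewrite e1 e2 eqxx.
  case: (eqVneq i' j') => [eij'|hij'].
    subst j'; move: S3 (S4 hij); rewrite !orbb => /eqP e1 /eqP e2.
    by move: hij; rewrite e1 e2 eqxx.
  case/orP: S1 => /eqP ei'.
    subst i'; move: (S2 hij'); rewrite [j' == i]eq_sym (negbTE hij') /= => /eqP ej; subst j'.
    have Hi := H i; have Hj := H j; rewrite eqxx in Hi; rewrite eq_sym (negbTE hij) eqxx in Hj.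
    move: Hi Hj; rewrite /pA /pB (negbTE hij); case: ifP => _.
      move=> /(inj1 _ _ bc bc') hc /(inj1 _ _) hd; apply: fin => //; move: hd; lia.
    move=> /(inj1 _ _) hd /(inj1 _ _ bc bc') hc; apply: fin => //; move: hd; lia.
  subst i'; move: (S2 hij'); rewrite [j' == j]eq_sym (negbTE hij') orbF => /eqP ej; subst j'.
  have Hi := H i; have Hj := H j.
  rewrite eqxx (negbTE hij) in Hi; rewrite eq_sym (negbTE hij) eqxx in Hj.
  move: Hi Hj; rewrite /pA /pB (negbTE hij) eq_sym (negbTE hij).
  case: (ltngtP i j) => [lt|lt|eqij] //.
    by move=> _ /(inj1 _ _); lia.
  by move=> /(inj1 _ _); lia.
  by move: hij; rewrite (val_inj eqij) eqxx.
- by move/rowP: h => /(_ i); rewrite !mxE eqxx => /eqP; rewrite (negbTE (A0 _ _ _ _)).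
- by move/rowP: h => /(_ i'); rewrite !mxE eqxx => /esym /eqP; rewrite (negbTE (A0 _ _ _ _)).
Qed.

Lemma fv_weight (p : nat) (a b : int) (U : 'F_p) (n : nat) z :
 prime p -> a*a + b*b = p%:Z ->
 a%:~R + U * b%:~R = 0 -> b%:~R - U * a%:~R = 0 -> U ^+ 2 = -1 ->
 (mweight_vec (a, b) (@fv p U n z) <= 2)%N.
Proof.
move=> pp pab h1 h2 hU.
have W e m : (e < 4)%N -> (mweight (a, b) (vv U e m) <= m)%N.
  by move=> he; apply: (@mweight_vv p a b U e m pp pab h1 h2 hU he).
have W0 := @mweight0 p a b U pp pab h1 h2 hU.
case: z => [[[[i j] c] d]|]; last by rewrite /mweight_vec big1 // => k _; rewrite mxE W0.
have bc := ltn_ord c; have bd := ltn_ord d.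
rewrite /mweight_vec (bigD1 i) //= mxE eqxx.
case: (eqVneq i j) => [eij|hij].
  subst j; rewrite big1 ?addn0; last by move=> k /negbTE hk; rewrite mxE hk W0.
  rewrite /pA eqxx; apply: leq_trans (W _ _ bc) _; lia.
rewrite (bigD1 j) /=; last by rewrite eq_sym.
rewrite mxE [j == i]eq_sym (negbTE hij) eqxx big1 ?addn0; last first.
  by move=> k /andP[/negbTE hk /negbTE hk']; rewrite mxE hk hk' W0.
rewrite /pA /pB (negbTE hij); case: ifP => _.
  rewrite -[leqRHS]/(1+1)%N; apply: leq_add; [exact: W | apply: W; lia].
rewrite -[leqRHS]/(1+1)%N; apply: leq_add; [apply: W; lia | exact: W].
Qed.

Lemma subsub (V : zmodType) (u v w z : V) : u - v - (w - z) = (u - w) - (v - z).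
Proof. by rewrite !opprB !addrA addrAC [RHS]addrAC; congr (_ + _); rewrite addrAC. Qed.

Theorem theorem5 (p : nat) (pi : gint) (n k : nat) (C : {vspace 'rV['F_p]_n}) :
  prime p -> (p %% 4 = 1)%N -> (13 <= p)%N ->
  gmul pi (gconj pi) = (p%:Z, 0%:Z) ->
  (\dim C = k)%N ->
  corrects2 pi C ->
  (8 * n ^ 2 + 1 <= p ^ (n - k))%N.
Proof.
move=> pp p4 p13 hpi hk hC.
case: pi hpi hC => a b hpi hC.
have pab : a*a + b*b = p%:Z.
  by move: hpi; rewrite /gmul /gconj /= => -[h _]; rewrite -h mulrN opprK.
have hAB : (a%:~R : 'F_p) * a%:~R + b%:~R * b%:~R = 0.
  by rewrite -!intrM -intrD pab -pmulrn pchar_Fp_0.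
have B0 : (b%:~R : 'F_p) != 0.
  apply/eqP => /(@Fp_int_dvd p _ pp) /dvdzP [q hq].
  case: (eqVneq q 0) => [q0|q0].
    have haa : a * a = p%:Z by move: pab; rewrite hq q0; nia.
    move: haa => /(congr1 absz); rewrite abszM /= => h.
    have : (`|a| %| p)%N by rewrite -h dvdn_mulr.
    case/primeP: pp => p1 /[apply] /orP[] /eqP ha; move: h; rewrite ha; lia.
  have q2 : 1 <= q * q.
    by nia.
  have : p%:Z * p%:Z <= b * b by rewrite hq; nia.
  nia.
pose U : 'F_p := - (a%:~R : 'F_p) / b%:~R.
have h1 : a%:~R + U * b%:~R = 0 by rewrite /U; field.
have h2 : b%:~R - U * a%:~R = 0.
  apply: (mulfI B0); rewrite mulr0 -hAB /U; field.
  exact: B0.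
have hU : U ^+ 2 = -1.
  have bb0 : (b%:~R : 'F_p) * b%:~R != 0 by rewrite mulf_neq0.
  apply: (mulIf bb0); rewrite mulN1r -(subr0 (U ^+ 2 * _)) -hAB /U; field.
  exact: B0.
pose T := [set x : 'rV['F_p]_n | (mweight_vec (a, b) x <= 2)%N].
have cardT : (8 * n ^ 2 + 1 <= #|T|)%N.
  have inj := @fv_inj p U n pp p13 hU.
  have := card_imset [set: option ('I_n * 'I_n * 'I_4 * 'I_2)] inj.
  rewrite cardsT card_option !card_prod !card_ord => e.
  have -> : (8 * n ^ 2 + 1 = (n * n * 4 * 2).+1)%N by lia.
  rewrite -e; apply: subset_leq_card; apply/subsetP => x /imsetP [z _ ->].
  by rewrite inE; apply: fv_weight.
apply: (leq_trans cardT).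
pose g (x : 'rV['F_p]_n) := x - projv C x.
have ginj : {in T &, injective g}.
  move=> x y; rewrite !inE => hx hy hg; apply/eqP; apply: contraT => hxy.
  move: (hC x y hx hy hxy) => /negP H; exfalso; apply: H.
  have -> : x - y = projv C (x - y).
    apply/eqP; rewrite linearB /= -subr_eq0 subsub; apply/eqP.
    by move: hg; rewrite /g => ->; rewrite subrr.
  by rewrite memv_proj.
rewrite -(card_in_imset ginj).
have sub : g @: T \subset (C^C)%VS.
  by apply/subsetP => x /imsetP [y _ ->]; rewrite /g memv_projC.
apply: leq_trans (subset_leq_card sub) _.
by rewrite card_vspace card_Fp // dimv_compl dimvf dim_matrix mul1r hk.
Qed.
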